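(* Let $p>2$ be a prime, let $b\in\mathbb{Q}_p$ with $0<|b|_p<1$, let $f(x)=\frac{x^2}{bx+1}$ for $x\in\mathbb{Q}_p\setminus\{-\frac1b\}$, let $x_2=\frac{1}{1-b}$, and let $0<\rho<1$. Then for every ball $B_r(y)\subset S_\rho(x_2)$ with $r<\rho$, $$B_r(y)\cap B_r(f(y))=\emptyset.$$
   Context: $|\cdot|_p$ is the $p$-adic norm on $\mathbb{Q}_p$. For $c\in\mathbb{Q}_p$ and $r>0$: $B_r(c)=\{x\in\mathbb{Q}_p:|x-c|_p<r\}$ and $S_r(c)=\{x\in\mathbb{Q}_p:|x-c|_p=r\}$. *)

(* Defs.v *)
(* Such (K,|.|) is exactly the completion of Q for |.|_p, i.e. Q_p
   up to isometric isomorphism. *)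
From HB Require Import structures.
From mathcomp Require Import all_boot all_order all_algebra.
From mathcomp Require Import reals.
Set Implicit Arguments. Unset Strict Implicit. Unset Printing Implicit Defensive.
Import Order.TTheory GRing.Theory Num.Theory.
Local Open Scope ring_scope.

Definition padic_abs (R : realType) (p : nat) (q : rat) : R :=
  if q == 0 then 0
  else (p%:R ^+ (logn p `|denq q|%N)) / (p%:R ^+ (logn p `|numq q|%N)).

Definition is_Qp (R : realType) (p : nat) (K : fieldType) (nrm : K -> R) : Prop :=
  (forall x, 0 <= nrm x) /\
  (forall x, nrm x = 0 <-> x = 0) /\
  (forall x y, nrm (x * y) = nrm x * nrm y) /\
  (forall x y, nrm (x + y) <= Num.max (nrm x) (nrm y)) /\
  (forall q : rat, nrm (ratr q) = padic_abs R p q) /\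
  (forall (x : K) (eps : R), 0 < eps -> exists q : rat, nrm (x - ratr q) < eps) /\
  (forall u : nat -> K,
     (forall eps : R, 0 < eps -> exists N, forall m n, (N <= m)%N -> (N <= n)%N ->
        nrm (u m - u n) < eps) ->
     exists l : K, forall eps : R, 0 < eps -> exists N, forall n, (N <= n)%N ->
        nrm (u n - l) < eps).

Definition pball (R : realType) (K : fieldType) (nrm : K -> R) (c : K) (r : R) (x : K) : Prop :=
  nrm (x - c) < r.
Definition psphere (R : realType) (K : fieldType) (nrm : K -> R) (c : K) (r : R) (x : K) : Prop :=
  nrm (x - c) = r.

Definition fb (K : fieldType) (b x : K) : K := x ^+ 2 / (b * x + 1).

(* Main.v *)
Require Import Defs.
From HB Require Import structures.
From mathcomp Require Import all_boot all_order all_algebra.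
From mathcomp Require Import reals.
From mathcomp Require Import ring.
Import Order.TTheory GRing.Theory Num.Theory.
Local Open Scope ring_scope.
Set Implicit Arguments. Unset Strict Implicit.

Section Aux.
Variables (R : realType) (K : fieldType) (nrm : K -> R).
Hypothesis h0 : forall x, 0 <= nrm x.
Hypothesis hz : forall x, nrm x = 0 <-> x = 0.
Hypothesis hm : forall x y, nrm (x * y) = nrm x * nrm y.
Hypothesis hu : forall x y, nrm (x + y) <= Num.max (nrm x) (nrm y).

Lemma nrm1 : nrm 1 = 1.
Proof.
have := hm 1 1; rewrite mulr1 => e.
have n0 : nrm 1 != 0 by apply/eqP => /hz; apply/eqP; exact: oner_neq0.
by apply: (mulfI n0); rewrite mulr1 -e.
Qed.

Lemma nrmN x : nrm (- x) = nrm x.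
Proof.
have e1 : nrm (-1) = 1.
  have := hm (-1) (-1); rewrite mulrNN mulr1 nrm1 => e.
  have := h0 (-1); move: e; set a := nrm (-1) => e ha.
  have : (a - 1) * (a + 1) = 0.
    have -> : (a - 1) * (a + 1) = a * a - 1 by ring.
    by rewrite -e subrr.
  move/eqP; rewrite mulf_eq0 => /orP [|h]; first by rewrite subr_eq0 => /eqP.
  exfalso; have ea : a = -1 by apply/eqP; rewrite -subr_eq0 opprK.
  move: ha; rewrite ea; by rewrite ler0N1.
by rewrite -mulN1r hm e1 mul1r.
Qed.

Lemma nrmB x y : nrm (x - y) <= Num.max (nrm x) (nrm y).
Proof. by rewrite -(nrmN y); apply: hu. Qed.

Lemma ultra_eq x y : nrm x < nrm y -> nrm (y + x) = nrm y.
Proof.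
move=> lt; apply/eqP; rewrite eq_le; apply/andP; split.
  by apply: le_trans (hu _ _) _; rewrite ge_max lexx ltW.
have := hu (y + x) (- x); rewrite addrK nrmN.
rewrite le_max => /orP [//|h]; exfalso; move: lt; by rewrite ltNge h.
Qed.

Lemma nrmV x : x != 0 -> nrm (x^-1) = (nrm x)^-1.
Proof.
move=> nx; have := hm x x^-1; rewrite mulfV // nrm1 => e.
have n0 : nrm x != 0 by apply/eqP => /hz; apply/eqP.
by apply: (mulfI n0); rewrite -e mulfV.
Qed.

Lemma nrm_neq0 x : nrm x = 1 -> x != 0.
Proof. move=> e; apply/eqP => ex; move: e; rewrite ex; have -> : nrm 0 = 0 by apply/hz. by move/eqP; rewrite eq_sym oner_eq0. Qed.
End Aux.

Theorem lemma4p2 (R : realType) (p : nat) (K : fieldType) (nrm : K -> R) :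
  prime p -> (2 < p)%N -> is_Qp p nrm ->
  forall b : K, 0 < nrm b -> nrm b < 1 ->
  forall rho : R, 0 < rho -> rho < 1 ->
  forall (y : K) (r : R), 0 < r -> r < rho ->
  (forall x, pball nrm y r x -> psphere nrm ((1 - b)^-1) rho x) ->
  forall x, ~ (pball nrm y r x /\ pball nrm (fb b y) r x).
Proof.
move=> _ _ [h0 [hz [hm [hu _]]]] b b0 b1 rho rho0 rho1 y r r0 rr hb x [hx1 hx2].
have hy : nrm (y - (1 - b)^-1) = rho.
  apply: hb; rewrite /pball subrr; have -> : nrm 0 = 0 by apply/hz. done.
have n1b : nrm (1 - b) = 1.
  rewrite (ultra_eq h0 hz hm hu) (nrm1 hz hm) //.
  by rewrite (nrmN h0 hz hm).
have nz1b := nrm_neq0 hz n1b.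
have nx2 : nrm ((1 - b)^-1) = 1 by rewrite (nrmV hz hm) // n1b invr1.
have ny : nrm y = 1.
  have -> : y = (1 - b)^-1 + (y - (1 - b)^-1) by rewrite addrC subrK.
  by rewrite (ultra_eq h0 hz hm hu) // hy nx2.
have nby : nrm (b * y + 1) = 1.
  rewrite addrC (ultra_eq h0 hz hm hu) (nrm1 hz hm) //.
  by rewrite hm ny mulr1.
have nzby := nrm_neq0 hz nby.
have ef : fb b y - y = y * (1 - b) * (y - (1 - b)^-1) / (b * y + 1).
  rewrite /fb; field; by rewrite nzby nz1b.
have : nrm (fb b y - y) = rho by rewrite ef !hm (nrmV hz hm) // ny n1b hy nby; rewrite invr1 !mul1r mulr1.
have : nrm (fb b y - y) < r.
  have -> : fb b y - y = (x - y) - (x - fb b y) by ring.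
  apply: le_lt_trans (nrmB h0 hz hm hu _ _) _.
  by rewrite gt_max; apply/andP; split.
move=> lt eq; move: lt; rewrite eq => lt.
by move: (lt_trans lt rr); rewrite ltxx.
Qed.
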